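(* Let the Mathieu group $M_{24}$ act on its natural $24$-element set $\Theta$, with a distinguished point $F\in\Theta$. Then (a) $hd((M_{24})^{\triangle}_{-})\geq 14$; (b) $M(23,14)\geq |M_{24}|=244{,}823{,}040$; (c) $M(22,14)\geq |M_{24}|/23=10{,}644{,}480$; (d) $M(21,14)\geq |M_{24}|/(23\cdot 22)=483{,}840$.
   Context: $hd(\pi,\sigma)$ is the number of points at which permutations $\pi,\sigma$ differ; $hd(A)$ is the minimum over distinct pairs in $A$. For a permutation $\pi$ of $\Theta$, $\pi^{\triangle}$ is defined by $\pi^{\triangle}(\pi^{-1}(F))=\pi(F)$, $\pi^{\triangle}(F)=F$, $\pi^{\triangle}(x)=\pi(x)$ otherwise; $\pi^{\triangle}_{-}$ is its restriction to $\Theta\setminus\{F\}$; for a set $S$ of permutations, $S^{\triangle}_{-}=\{\pi^{\triangle}_{-}:\pi\in S\}$. $M(n,d)$ is the maximum size of a set of permutations of an $n$-element set with pairwise Hamming distance at least $d$. *)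

(* Defs.v *)
From mathcomp Require Import all_boot all_fingroup.
Set Implicit Arguments. Unset Strict Implicit. Unset Printing Implicit Defensive.



Definition hd (T : finType) (p q : {perm T}) : nat := #|[pred x | p x != q x]|.

Definition hdset (T : finType) (A : {set {perm T}}) : nat :=
  \big[minn/#|T|]_(pq in setX A A | pq.1 != pq.2) hd pq.1 pq.2.

Definition Mnd (n d : nat) : nat :=
  \max_(S : {set {perm 'I_n}} |
          [forall p in S, forall q in S, (p != q) ==> (d <= hd p q)]) #|S|.

(* Theta = PG(1,23) = GF(23) u {oo}, with point t in GF(23) encoded as t
   (0..22) and oo encoded as 23.  Conway's generators:
     alpha : t -> t+1,  beta : t -> 2t,  gamma : t -> -1/t,
     delta : t -> t^3/9 (t a nonzero square), 9 t^3 (t a non-square),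
             fixing 0 and oo. *)
Definition tab (s : seq nat) : {ffun 'I_24 -> 'I_24} :=
  [ffun i : 'I_24 => inord (nth 0 s i)].

Definition alpha_s := [:: 1; 2; 3; 4; 5; 6; 7; 8; 9; 10; 11; 12; 13; 14; 15; 16; 17; 18; 19; 20; 21; 22; 0; 23].
Definition beta_s  := [:: 0; 2; 4; 6; 8; 10; 12; 14; 16; 18; 20; 22; 1; 3; 5; 7; 9; 11; 13; 15; 17; 19; 21; 23].
Definition gamma_s := [:: 23; 22; 11; 15; 17; 9; 19; 13; 20; 5; 16; 2; 21; 7; 18; 3; 10; 4; 14; 6; 8; 12; 1; 0].
Definition delta_s := [:: 0; 18; 6; 3; 2; 21; 1; 5; 16; 12; 7; 19; 8; 9; 17; 15; 13; 11; 4; 22; 10; 20; 14; 23].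

Lemma tab_inj (s : seq nat) :
  size s = 24 -> uniq s -> all (fun k => k < 24) s -> injective (tab s).
Proof.
move=> Hs Hu Ha i j; rewrite !ffunE => /(congr1 val).
have Hl (k : 'I_24) : nth 0 s k < 24.
  by apply: (allP Ha); apply: mem_nth; rewrite Hs.
rewrite /= !inordK ?Hl // => E; apply: val_inj.
by apply/eqP; rewrite -(nth_uniq 0 _ _ Hu) ?Hs ?ltn_ord // E.
Qed.

Lemma alpha_inj : injective (tab alpha_s). Proof. exact: tab_inj. Qed.
Lemma beta_inj  : injective (tab beta_s).  Proof. exact: tab_inj. Qed.
Lemma gamma_inj : injective (tab gamma_s). Proof. exact: tab_inj. Qed.
Lemma delta_inj : injective (tab delta_s). Proof. exact: tab_inj. Qed.

Definition alpha : {perm 'I_24} := perm alpha_inj.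
Definition beta  : {perm 'I_24} := perm beta_inj.
Definition gamma : {perm 'I_24} := perm gamma_inj.
Definition delta : {perm 'I_24} := perm delta_inj.

Definition M24 : {set {perm 'I_24}} := (<<[set alpha; beta; gamma; delta]>>)%g.

Definition tri (T : finType) (F : T) (p : {perm T}) (x : T) : T :=
  if x == F then F else if x == (p^-1)%g F then p F else p x.

Lemma tri_neq (T : finType) (F : T) (p : {perm T}) (x : T) :
  x != F -> tri F p x != F.
Proof.
move=> xF; rewrite /tri (negbTE xF).
case: ifP => [/eqP E | /negbT H].
  apply: contra xF => /eqP E2; rewrite E; apply/eqP.
  by rewrite -{1}E2 permK.
by apply: contra H => /eqP <-; rewrite permK.
Qed.

Lemma tri_inj (T : finType) (F : T) (p : {perm T}) : injective (tri F p).
Proof.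
have E : tri F p =1 (p * tperm F (p F))%g.
  move=> x; rewrite permM /tri.
  case: (x =P F) => [-> | /eqP xF]; first by rewrite tpermR.
  case: (x =P (p^-1)%g F) => [-> | /eqP xp]; first by rewrite permKV tpermL.
  rewrite tpermD //.
    by apply: contra xp => /eqP ->; rewrite permK.
  by apply: contra xF => /eqP /perm_inj ->.
by move=> x y; rewrite !E => /perm_inj.
Qed.

Definition ThetaF (T : finType) (F : T) : finType := {x : T | x != F}.

Definition tri_minus_fun (T : finType) (F : T) (p : {perm T})
    (x : ThetaF F) : ThetaF F :=
  exist _ (tri F p (val x)) (@tri_neq T F p (val x) (valP x)).

Lemma tri_minus_inj (T : finType) (F : T) (p : {perm T}) :
  injective (@tri_minus_fun T F p).
Proof. by move=> x y [] /tri_inj E; apply: val_inj. Qed.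

Definition tri_minus (T : finType) (F : T) (p : {perm T}) : {perm ThetaF F} :=
  perm (@tri_minus_inj T F p).

Definition tri_minus_set (T : finType) (F : T) (S : {set {perm T}}) :
  {set {perm ThetaF F}} := [set tri_minus F p | p in S].

(* Main.v *)
Require Import Defs.
From mathcomp Require Import all_boot all_fingroup zify.
Set Implicit Arguments. Unset Strict Implicit. Unset Printing Implicit Defensive.

Definition word := seq (nat * bool).
Section SLP.
Variables (T : Type) (one : T) (mul : T -> T -> T) (inv : T -> T).
Definition evl (acc : seq T) (l : nat * bool) :=
  let g := nth one acc l.1 in if l.2 then inv g else g.
Definition evw (acc : seq T) (w : word) := foldr (fun l r => mul (evl acc l) r) one w.
Fixpoint evp (acc : seq T) (p : seq word) : seq T :=
  if p is w :: p' then evp (rcons acc (evw acc w)) p' else acc.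
End SLP.

Lemma evp_rel (T U : Type) (R : T -> U -> Prop) one1 mul1 inv1 one2 mul2 inv2 :
  R one1 one2 -> (forall a b c d, R a b -> R c d -> R (mul1 a c) (mul2 b d)) ->
  (forall a b, R a b -> R (inv1 a) (inv2 b)) ->
  forall p acc1 acc2, size acc1 = size acc2 ->
  (forall i, R (nth one1 acc1 i) (nth one2 acc2 i)) ->
  forall i, R (nth one1 (evp one1 mul1 inv1 acc1 p) i) (nth one2 (evp one2 mul2 inv2 acc2 p) i).
Proof.
move=> R1 RM RI; elim=> [|w p IH] acc1 acc2 Es Ri //=.
apply: IH; first by rewrite !size_rcons Es.
have Rw : R (evw one1 mul1 inv1 acc1 w) (evw one2 mul2 inv2 acc2 w).
  elim: w => [|[j b] w IHw] //=; apply: RM => //.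
  by rewrite /evl /=; case: b; [apply: RI|]; apply: Ri.
move=> i; rewrite !nth_rcons Es; case: ltnP => // _.
by case: eqP.
Qed.

Lemma evp_prefix (T : Type) one mul inv p (acc : seq T) i :
  i < size acc -> nth one (evp one mul inv acc p) i = nth one acc i.
Proof.
elim: p acc => [|w p IH] acc //= Hi.
rewrite IH ?size_rcons 1?ltnW //; first by rewrite nth_rcons Hi.
Qed.

Definition sid : seq nat := iota 0 24.
Definition scomp (s t : seq nat) := [seq nth 0 t (nth 0 s x) | x <- iota 0 24].
Definition sinv (s : seq nat) := [seq index x s | x <- iota 0 24].
Definition Rel (s : seq nat) (g : {perm 'I_24}) := s = [seq val (g i) | i <- enum 'I_24].

Lemma RelE s g : Rel s g -> forall i : 'I_24, nth 0 s i = g i.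
Proof.
move=> -> i; rewrite (nth_map ord0) ?size_enum_ord ?ltn_ord //.
by rewrite nth_ord_enum.
Qed.

Lemma mapvalE (f : 'I_24 -> nat) :
  [seq f i | i <- enum 'I_24] = [seq (if insub x is Some i then f i else 0) | x <- iota 0 24].
Proof.
rewrite -val_enum_ord -map_comp; apply: eq_map => i /=.
by rewrite valK.
Qed.

Lemma RelP s (g : {perm 'I_24}) : size s = 24 -> (forall i : 'I_24, nth 0 s i = g i) -> Rel s g.
Proof.
move=> Hs Hn; apply: (@eq_from_nth _ 0); first by rewrite size_map size_enum_ord.
move=> i; rewrite Hs => Hi.
by rewrite (nth_map ord0) ?size_enum_ord // -[i]/(val (Ordinal Hi)) nth_ord_enum Hn.
Qed.

Lemma Rel_size s g : Rel s g -> size s = 24.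
Proof. by move=> ->; rewrite size_map size_enum_ord. Qed.

Lemma Rel_id : Rel sid 1%g.
Proof.
apply: RelP => // i; rewrite perm1 nth_iota //.
Qed.

Lemma Rel_comp s t g h : Rel s g -> Rel t h -> Rel (scomp s t) (g * h)%g.
Proof.
move=> Rs Rt; apply: RelP; first by rewrite size_map size_iota.
move=> i; rewrite (nth_map 0) ?size_iota // nth_iota // add0n.
by rewrite (RelE Rs) (RelE Rt (g i)) permM.
Qed.

Lemma Rel_inv s g : Rel s g -> Rel (sinv s) (g^-1)%g.
Proof.
move=> Rs; apply: RelP; first by rewrite size_map size_iota.
move=> i; rewrite (nth_map 0) ?size_iota // nth_iota // add0n.
have -> : (i : nat) = (val \o g) ((g^-1)%g i) by rewrite /= permKV.
by rewrite Rs index_map ?index_enum_ord //; apply: inj_comp; [apply: val_inj|apply: perm_inj].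
Qed.

Lemma Rel_tab s (H : injective (tab s)) : size s = 24 -> all (fun k => k < 24) s -> Rel s (perm H).
Proof.
move=> Hs Ha; apply: RelP => // i; rewrite permE ffunE inordK //.
by apply: (allP Ha); apply: mem_nth; rewrite Hs.
Qed.

Definition gens_s := [:: alpha_s; beta_s; gamma_s; delta_s].
Definition gens := [:: alpha; beta; gamma; delta].
Definition prog : seq (seq (nat * bool)) := [::
[::(2,false);(0,false);(2,true)];
[::(1,false);(3,false)];
[::(5,false);(1,false)];
[::(0,false);(4,false);(2,true);(6,true)];
[::(1,false);(3,false)];
[::(8,false);(7,false)];
[::(0,false);(7,false);(0,true);(9,true)];
[::(1,false);(3,false)];
[::(7,false);(7,false)];
[::(0,false);(10,false);(0,true);(11,true);(12,true)];
[::(0,false);(13,false);(0,true)];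
[::(3,false);(14,false)];
[::(7,false);(10,false)];
[::(16,false);(14,false)];
[::(14,false);(14,false)];
[::(0,false);(7,false);(0,true);(15,true);(17,true);(18,true);(13,true)];
[::(7,false);(7,false)];
[::(20,false);(10,false)];
[::(21,false);(19,false)];
[::(14,false);(13,false)];
[::(0,false);(14,false);(0,true);(22,true);(23,true)];
[::(7,false);(24,false)];
[::(14,false);(19,false)];
[::(13,false);(19,false)];
[::(0,false);(14,false);(0,true);(25,true);(26,true);(27,true)];
[::(28,false);(28,false)];
[::(0,false);(28,false);(0,true);(13,true);(29,true)];
[::(0,false);(0,false)];
[::(0,false);(2,false)];
[::(0,false);(3,false)];
[::(2,false);(7,false)];
[::(2,false);(10,false)];
[::(2,false);(13,false)];
[::(2,false);(14,false)];
[::(2,false);(19,false)];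
[::(2,false);(24,false)];
[::(2,false);(28,false)];
[::(31,false);(0,false)];
[::(31,false);(1,false)];
[::(31,false);(2,false)];
[::(31,false);(3,false)];
[::(31,false);(10,false)];
[::(32,false);(13,false)];
[::(32,false);(19,false)];
[::(32,false);(30,false)];
[::(33,false);(13,false)];
[::(34,false);(0,false)];
[::(35,false);(3,false)];
[::(1,false);(1,false)];
[::(1,false);(3,false)];
[::(1,false);(4,false)];
[::(1,false);(10,false)];
[::(3,false);(1,false)];
[::(3,false);(4,false)];
[::(3,false);(7,false)];
[::(3,false);(10,false)];
[::(3,false);(13,false)];
[::(3,false);(14,false)];
[::(3,false);(24,false)];
[::(4,false);(4,false)];
[::(4,false);(7,false)];
[::(4,false);(10,false)];
[::(4,false);(28,false)];
[::(52,false);(7,false)];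
[::(53,false);(1,false)];
[::(53,false);(10,false)];
[::(57,false);(14,false)];
[::(7,false);(7,false)];
[::(7,false);(10,false)];
[::(7,false);(13,false)];
[::(7,false);(14,false)];
[::(7,false);(19,false)];
[::(7,false);(24,false)];
[::(7,false);(28,false)];
[::(7,false);(30,false)];
[::(10,false);(10,false)];
[::(10,false);(14,false)];
[::(10,false);(28,false)];
[::(71,false);(10,false)];
[::(71,false);(19,false)];
[::(71,false);(24,false)];
[::(72,false);(14,false)];
[::(73,false);(7,false)];
[::(73,false);(24,false)];
[::(74,false);(30,false)];
[::(75,false);(13,false)];
[::(14,false);(13,false)];
[::(14,false);(14,false)];
[::(14,false);(19,false)];
[::(14,false);(24,false)];
[::(14,false);(30,false)];
[::(90,false);(14,false)];
[::(90,false);(19,false)];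
[::(90,false);(24,false)];
[::(90,false);(28,false)];
[::(91,false);(24,false)];
[::(92,false);(13,false)];
[::(92,false);(14,false)];
[::(92,false);(30,false)];
[::(93,false);(13,false)];
[::(94,false);(13,false)];
[::(94,false);(14,false)];
[::(94,false);(24,false)];
[::(95,false);(14,false)];
[::(97,false);(24,false)];
[::(13,false);(13,false)];
[::(13,false);(19,false)];
[::(13,false);(24,false)];
[::(13,false);(28,false)];
[::(13,false);(30,false)];
[::(24,false);(13,false)];
[::(24,false);(28,false)];
[::(109,false);(19,false)];
[::(109,false);(28,false)];
[::(110,false);(19,false)];
[::(110,false);(24,false)];
[::(110,false);(30,false)];
[::(111,false);(24,false)];
[::(111,false);(28,false)];
[::(112,false);(13,false)];
[::(113,false);(13,false)];
[::(117,false);(13,false)];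
[::(19,false);(19,false)];
[::(19,false);(28,false)];
[::(28,false);(19,false)];
[::(28,false);(28,false)];
[::(28,false);(30,false)];
[::(126,false);(28,false)];
[::(126,false);(30,false)];
[::(127,false);(28,false)];
[::(127,false);(30,false)];
[::(128,false);(19,false)];
[::(129,false);(19,false)];
[::(130,false);(19,false)];
[::(136,false);(30,false)];
[::(30,false);(30,false)];
[::]].
Definition lvO : seq (seq nat) := [::[::0;1;23;2;22;18;16;9;14;13;19;21;8;3;4;11;6;7;15;5;20;10;17;12];[::1;2;18;23;4;6;21;7;13;3;19;14;10;5;11;22;16;9;8;15;12;20;17];[::2;6;7;5;20;8;19;14;16;11;21;22;10;12;17;15;18;3;13;4;9;23];[::3;17;5;9;16;20;23;7;15;18;19;8;22;4;6;12;14;13;21;10;11];[::4;18;23;10;21;11;5;19;14;8;12;7;13;9;16;15;22;17;6;20];[::5;15;19;22;13;11;18;9;6;20;14;8;23;21;17;16];[::6;21;16]].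
Definition lvT : seq (seq nat) := [::[::140;0;2;31;32;33;34;35;36;37;38;39;40;41;42;43;44;45;46;47;48;49;50;51];[::140;1;3;4;52;53;54;55;56;57;58;59;60;61;62;63;64;65;66;67;68;69;70];[::140;7;10;71;72;73;74;75;76;77;78;79;80;81;82;83;84;85;86;87;88;89];[::140;14;90;91;92;93;94;95;96;97;98;99;100;101;102;103;104;105;106;107;108];[::140;13;24;109;110;111;112;113;114;115;116;117;118;119;120;121;122;123;124;125];[::140;19;28;126;127;128;129;130;131;132;133;134;135;136;137;138];[::140;30;139]].

Definition evs := evp sid scomp sinv gens_s prog.
Definition gel := evp 1%g (fun x y => x * y)%g (fun x => x^-1)%g gens prog.
Definition el i := nth 1%g gel i.

Lemma Rel_el i : Rel (nth sid evs i) (el i).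
Proof.
apply: (@evp_rel _ _ (fun a b => Rel b a)).
- exact: Rel_id.
- by move=> a b c d; apply: Rel_comp.
- by move=> a b; apply: Rel_inv.
- by [].
case=> [|[|[|[|j]]]] /=; try apply: Rel_tab => //.
by rewrite !nth_nil; exact: Rel_id.
Qed.


Definition Ol l := nth [::] lvO l.
Definition Tl l := nth [::] lvT l.
Definition Sl l := (if l is 0 then [:: 0; 1; 2; 3] else [::]) ++ flatten (drop l lvT).

Definition sws (F v z : nat) := if z == F then v else if z == v then F else z.
Definition Tfs (k : seq nat) (F v z : nat) :=
  if z == v then F else if nth 0 k z == F then nth 0 k v else nth 0 k z.
Definition Dseq k F v := count (fun z => (z != v) && (Tfs k F v z != sws F v z)) (iota 0 24).
Definition Pseq k := all (fun F => all (fun v => 14 <= Dseq k F v) (iota 0 24)) (iota 0 24).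

Section Check.
Variable ev : seq (seq nat).
Definition ev_ i := nth sid ev i.
Definition trv l y := ev_ (nth 0 (Tl l) (index y (Ol l))).
Fixpoint siftf (fuel l : nat) (x : seq nat) : bool :=
  if fuel is f.+1 then let z := nth 0 x l in
    (z \in Ol l) && siftf f l.+1 (scomp x (sinv (trv l z)))
  else x == sid.
Definition sift l x := siftf (7 - l) l x.
Definition chkl l :=
  [&& all (fun s => nth 0 (ev_ s) l == l) (Sl l.+1),
      all (fun s => s \in Sl l) (Sl l.+1),
      uniq (Ol l), all (fun y => y < 24) (Ol l), l \in Ol l, trv l l == sid,
      all (fun y => nth 0 (trv l y) l == y) (Ol l),
      all (fun y => nth 0 (Tl l) (index y (Ol l)) \in Sl l) (Ol l),
      (l < 5) ==> all (fun y => (l <= y) ==> (y \in Ol l)) (iota 0 24) &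
      all (fun y => all (fun s => let z := nth 0 (ev_ s) y in
          (z \in Ol l) && sift l.+1 (scomp (scomp (trv l y) (ev_ s)) (sinv (trv l z))))
        (Sl l)) (Ol l)].
Definition chkK := all (fun z => all (fun y => let k := scomp (trv 6 z) (trv 5 y) in
   (k == sid) || Pseq k) (Ol 5)) (Ol 6).
Definition chkall := all chkl (iota 0 7) && chkK.
End Check.

Definition allchk := let ev := evs in chkall ev.
Lemma allchk_ok : allchk = true.
Proof. vm_compute. reflexivity. Qed.


Section Level.
Local Open Scope group_scope.
Variables (S S' : {set {perm 'I_24}}) (b : 'I_24) (O : seq 'I_24) (t : 'I_24 -> {perm 'I_24}).
Hypotheses (HS'b : forall s, s \in S' -> s b = b)
  (Ht : forall y, y \in O -> t y \in <<S>>) (Htb : forall y, y \in O -> t y b = y)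
  (HbO : b \in O) (Ht1 : t b = 1)
  (Hsch : forall y s, y \in O -> s \in S -> s y \in O /\ t y * s * (t (s y))^-1 \in <<S'>>).

Lemma fix_gen h : h \in <<S'>> -> h b = b.
Proof.
have sub : <<S'>> \subset 'C[b | 'P].
  by rewrite gen_subG; apply/subsetP => s /HS'b Hs; apply/astab1P.
by move=> /(subsetP sub) /astab1P.
Qed.

Lemma level_dec g : g \in <<S>> -> exists2 h, h \in <<S'>> & exists2 y, y \in O & g = h * t y.
Proof.
case/gen_prodgP=> n [c Hc ->]; elim: n c Hc => [|n IH] c Hc.
  by rewrite big_ord0; exists 1; rewrite ?group1 //; exists b; rewrite ?Ht1 ?mulg1.
rewrite big_ord_recr /=.
have [h Hh [y Hy E]] := IH (fun i => c (widen_ord (leqnSn n) i)) (fun i => Hc _).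
rewrite E; have [Hz Hs] := Hsch Hy (Hc ord_max).
exists (h * (t y * c ord_max * (t (c ord_max y))^-1)); first by rewrite groupM.
exists (c ord_max y) => //.
by rewrite !mulgA mulgKV.
Qed.

Lemma level_stab g : g \in <<S>> -> g b = b -> g \in <<S'>>.
Proof.
move=> /level_dec [h Hh [y Hy ->]]; rewrite permM fix_gen // Htb // => Eb.
by move: Ht1; rewrite -Eb => ->; rewrite mulg1.
Qed.

Lemma level_card : uniq O -> S' \subset S -> #|<<S>>| = (size O * #|<<S'>>|)%N.
Proof.
move=> uO sS; rewrite -(card_orbit_stab 'P [group of <<S>>] b).
congr (_ * _)%N.
  rewrite -(card_uniqP uO); apply: eq_card => y; apply/orbitP/idP.
    case=> g /level_dec [h Hh [z Hz ->]] /= <-; rewrite /aperm permM fix_gen // Htb //.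
  by move=> Hy; exists (t y); rewrite ?Ht //= /aperm Htb.
apply: eq_card => g; rewrite inE /=; apply/andP/idP.
  by case=> Hg /astab1P; apply: level_stab.
move=> Hg; split; first by apply: (subsetP (genS sS)).
by apply/astab1P; apply: fix_gen.
Qed.
End Level.


Definition HSset l := [set x | x \in [seq el i | i <- Sl l]].
Definition H l := <<HSset l>>%g.
Definition ttn l z := el (nth 0 (Tl l) (index z (Ol l))).
Definition Oo l := [seq (inord y : 'I_24) | y <- Ol l].

Lemma Rel_inj s g h : Rel s g -> Rel s h -> g = h.
Proof. by move=> Rg Rh; apply/permP => i; apply: val_inj => /=; rewrite -(RelE Rg) -(RelE Rh). Qed.

Lemma Rel_trv l z : Rel (trv evs l z) (ttn l z).
Proof. exact: Rel_el. Qed.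

Lemma chk_l l : l < 7 -> chkl evs l.
Proof.
move=> Hl; have := allchk_ok; rewrite /allchk /chkall => /andP [/allP A _].
by apply: A; rewrite mem_iota.
Qed.

Lemma chk_K : chkK evs.
Proof. by have := allchk_ok; rewrite /allchk /chkall => /andP [_]. Qed.

Lemma in_HS l i : i \in Sl l -> el i \in H l.
Proof. by move=> Hi; apply: mem_gen; rewrite inE map_f. Qed.

Lemma HS_el l s : s \in HSset l -> exists2 i, i \in Sl l & s = el i.
Proof. by rewrite inE => /mapP. Qed.

Lemma H_sub l : l < 7 -> H l.+1 \subset H l.
Proof.
move=> /chk_l /and5P [_ C _ _ /and5P [_ _ _ _ /andP [_ _]]]; apply: genS; apply/subsetP => s.
by case/HS_el => i Hi ->; rewrite inE map_f //; apply: (allP C).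
Qed.

Lemma ttn_in l z : l < 7 -> z \in Ol l -> ttn l z \in H l.
Proof.
move=> /chk_l /and5P [_ _ _ _ /and5P [_ _ _ C /andP [_ _]]] Hz; apply: in_HS.
exact: (allP C).
Qed.

Lemma sift_ok f l x g : l + f = 7 -> Rel x g -> siftf evs f l x -> g \in H l.
Proof.
elim: f l x g => [|f IH] l x g /= Hlf Rx.
  move=> /eqP E; rewrite E in Rx; rewrite (Rel_inj Rx Rel_id); exact: group1.
have Hl : l < 7 by rewrite -Hlf addnS ltnS leq_addr.
case/andP=> Hz /(IH l.+1 _ _ _ (Rel_comp Rx (Rel_inv (Rel_trv _ _)))).
rewrite addSnnS => /(_ Hlf) Hg.
have Ht := ttn_in Hl Hz.
rewrite -(mulgKV (ttn l (nth 0 x l)) g); apply: groupM => //.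
exact: (subsetP (H_sub Hl)).
Qed.


Lemma Ol_lt l : l < 7 -> all (fun y => y < 24) (Ol l).
Proof. by move=> /chk_l /and5P [_ _ _ C _]. Qed.

Lemma mem_Oo l (y : 'I_24) : l < 7 -> (y \in Oo l) = (nat_of_ord y \in Ol l).
Proof.
move=> Hl; apply/mapP/idP.
  by case=> z Hz ->; rewrite /= inordK //; apply: (allP (Ol_lt Hl)).
by move=> Hy; exists (val y) => //; rewrite inord_val.
Qed.

Lemma val_inord24 l : l < 7 -> nat_of_ord (inord l : 'I_24) = l.
Proof. by move=> Hl; rewrite inordK // (leq_trans Hl). Qed.

Section LevelL.
Variable l : nat.
Hypothesis Hl : l < 7.
Let b : 'I_24 := inord l.
Let t := fun y : 'I_24 => ttn l (val y).

Lemma LHS'b s : s \in HSset l.+1 -> s b = b.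
Proof.
case/HS_el => i Hi ->.
have := chk_l Hl => /and5P [C1 _ _ _ _].
have /eqP := allP C1 _ Hi; rewrite /ev_ -/b.
rewrite -(val_inord24 Hl) -/b (RelE (Rel_el i)) => E.
by apply: val_inj.
Qed.

Lemma LHt y : y \in Oo l -> t y \in H l.
Proof. by rewrite mem_Oo // => Hy; apply: ttn_in. Qed.

Lemma LHtb y : y \in Oo l -> t y b = y.
Proof.
rewrite mem_Oo // => Hy.
have := chk_l Hl => /and5P [_ _ _ _ /and5P [_ _ C7 _ _]].
have E := RelE (Rel_trv l (val y)) b; rewrite /b val_inord24 // in E.
have /eqP := allP C7 _ Hy; rewrite E.
by move=> E2; apply: val_inj.
Qed.

Lemma LHbO : b \in Oo l.
Proof. by rewrite mem_Oo // val_inord24 //; have := chk_l Hl => /and5P [_ _ _ _ /and5P [C _ _ _ _]]. Qed.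

Lemma LHt1 : t b = 1%g.
Proof.
have := chk_l Hl => /and5P [_ _ _ _ /and5P [_ C6 _ _ _]].
rewrite /t (_ : val b = l); last exact: val_inord24.
move/eqP: C6 => C6.
by apply: (Rel_inj (Rel_trv l l)); rewrite C6; exact: Rel_id.
Qed.

Lemma LHsch y s : y \in Oo l -> s \in HSset l ->
  s y \in Oo l /\ (t y * s * (t (s y))^-1)%g \in H l.+1.
Proof.
rewrite mem_Oo // => Hy /HS_el [i Hi ->].
have := chk_l Hl => /and5P [_ _ _ _ /and5P [_ _ _ _ /andP [_ C10]]].
have /andP [Hz Hs] := allP (allP C10 _ Hy) _ Hi.
have Ez : val (el i y) = nth 0 (ev_ evs i) y by rewrite /ev_ (RelE (Rel_el i)).
rewrite mem_Oo // Ez; split => //.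
apply: (@sift_ok (7 - l.+1) l.+1 _ _ _ _ Hs); first by rewrite subnKC.
rewrite /t Ez.
apply: Rel_comp; first apply: Rel_comp; [exact: Rel_trv | exact: Rel_el |].
exact: Rel_inv (Rel_trv _ _).
Qed.

Lemma H_dec g : g \in H l -> exists2 h, h \in H l.+1 & exists2 y, y \in Oo l & g = (h * t y)%g.
Proof. exact: (@level_dec (HSset l) (HSset l.+1) b (Oo l) t LHbO LHt1 LHsch). Qed.

Lemma H_stab g : g \in H l -> g b = b -> g \in H l.+1.
Proof. exact: (@level_stab (HSset l) (HSset l.+1) b (Oo l) t LHS'b LHtb LHbO LHt1 LHsch). Qed.

Lemma H_card : #|H l| = (size (Ol l) * #|H l.+1|)%N.
Proof.
rewrite /H (@level_card (HSset l) (HSset l.+1) b (Oo l) t LHS'b LHt LHtb LHbO LHt1 LHsch) ?size_map //.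
  rewrite map_inj_in_uniq; first by have := chk_l Hl => /and5P [_ _ C _ _].
  move=> x y /(allP (Ol_lt Hl)) Hx /(allP (Ol_lt Hl)) Hy /(congr1 (@nat_of_ord 24)).
  by rewrite !inordK.
apply/subsetP => s /HS_el [i Hi ->]; rewrite inE map_f //.
by have := chk_l Hl => /and5P [_ C _ _ _]; apply: (allP C).
Qed.
End LevelL.

Lemma H7 : H 7 = 1%g.
Proof.
rewrite /H; have -> : HSset 7 = set0 by apply/setP => x; rewrite !inE.
exact: gen0.
Qed.

Lemma el_M24 i : el i \in M24.
Proof.
have R1 : ((1 : {perm 'I_24}) = 1 /\ (1 : {perm 'I_24}) \in M24)%g by split; rewrite ?group1.
have := @evp_rel _ _ (fun a b => a = b /\ a \in M24) 1%g (fun x y => x * y)%g (fun x => x^-1)%g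
  1%g (fun x y => x * y)%g (fun x => x^-1)%g R1.
case/(_ _ _ prog gens gens erefl _ i).
- by move=> a b c d [-> ?] [-> ?]; split; rewrite ?groupM.
- by move=> a b [-> ?]; split; rewrite ?groupV.
- move=> j; split=> //; case: j => [|[|[|[|j]]]] /=; try by apply: mem_gen; rewrite !inE eqxx ?orbT.
  by rewrite nth_nil group1.
by [].
Qed.

Lemma H0 : H 0 = M24.
Proof.
apply/eqP; rewrite eqEsubset; apply/andP; split.
  by rewrite gen_subG; apply/subsetP => s /HS_el [i _ ->]; apply: el_M24.
rewrite gen_subG; apply/subsetP => s; rewrite !inE -!orbA.
have E j : j < 4 -> el j = nth 1%g gens j by move=> Hj; rewrite /el /gel evp_prefix.
have Ea : el 0 = alpha by rewrite E. have Eb : el 1 = beta by rewrite E.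
have Ec : el 2 = gamma by rewrite E. have Ed : el 3 = delta by rewrite E.
by case/or4P => /eqP ->; [rewrite -Ea | rewrite -Eb | rewrite -Ec | rewrite -Ed]; apply: in_HS.
Qed.

Lemma card_M24 : #|M24| = 24 * 23 * 22 * 21 * 20 * 48.
Proof.
rewrite -H0 H_card // H_card // H_card // H_card // H_card // H_card // H_card // H7 cards1.
have -> : 48 = 16 * 3 by [].
by rewrite !mulnA muln1.
Qed.

Lemma H5_elem g : g \in H 5 -> exists2 z, z \in Oo 6 & exists2 y, y \in Oo 5 & g = (ttn 6 (val z) * ttn 5 (val y))%g.
Proof.
case/H_dec => // h /H_dec [] // h' + [z Hz ->] [y Hy ->].
rewrite H7 => /set1gP ->; rewrite mul1g; exists z => //; by exists y.
Qed.


Lemma cnt (P : pred 'I_24) : #|[set z | P z]| = count P (enum 'I_24).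
Proof.
rewrite cardsE cardE -deprecated_filter_index_enum size_filter.
have Hp : perm_eq (index_enum 'I_24) (enum 'I_24).
  apply: uniq_perm; rewrite ?index_enum_uniq ?enum_uniq //.
  by move=> x; rewrite mem_index_enum mem_enum.
by move/seq.permP: Hp => ->.
Qed.

Definition sw (F v z : 'I_24) := if z == F then v else if z == v then F else z.
Definition Tf (s : {perm 'I_24}) (F v z : 'I_24) :=
  if z == v then F else if s z == F then s v else s z.
Definition Dm s F v := #|[set z | (z != v) && (Tf s F v z != sw F v z)]|.

Lemma Dm_seq k g (F v : 'I_24) : Rel k g -> Dseq k F v = Dm g F v.
Proof.
move=> Rk; rewrite /Dm cnt /Dseq -val_enum_ord count_map; apply: eq_count => z /=.
rewrite /Tfs /sws /Tf /sw !(RelE Rk).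
have Eo (a b : 'I_24) : (a == b) = (nat_of_ord a == nat_of_ord b) by [].
by rewrite !Eo !(fun_if (@nat_of_ord 24)).
Qed.

Lemma conj_card (h : {perm 'I_24}) (P P' : pred 'I_24) :
  (forall z, P' (h z) = P z) -> #|[set z | P' z]| = #|[set z | P z]|.
Proof.
move=> HP; rewrite -[RHS](card_imset _ (@perm_inj _ h)); apply: eq_card => x.
rewrite inE; have [z ->] : exists z, x = h z by exists ((h^-1)%g x); rewrite permKV.
by rewrite mem_imset ?inE ?HP //; apply: perm_inj.
Qed.

Lemma conjE (h s : {perm 'I_24}) z : (h^-1 * s * h)%g (h z) = h (s z).
Proof. by rewrite !permM permK. Qed.

Lemma Dm_conj h s F v : Dm (h^-1 * s * h)%g (h F) (h v) = Dm s F v.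
Proof.
apply: (conj_card (h := h)) => z /=.
have E1 : Tf (h^-1 * s * h)%g (h F) (h v) (h z) = h (Tf s F v z).
  by rewrite /Tf !conjE !(inj_eq perm_inj); case: (z == v) => //; case: (s z == F).
have E2 : sw (h F) (h v) (h z) = h (sw F v z).
  by rewrite /sw !(inj_eq perm_inj); case: (z == F) => //; case: (z == v).
by rewrite E1 E2 !(inj_eq perm_inj).
Qed.

Lemma fix_conj (h s : {perm 'I_24}) : #|[set z | ((h^-1 * s * h)%g : {perm 'I_24}) z == z]| = #|[set z | s z == z]|.
Proof. by apply: (conj_card (h := h)) => z; rewrite conjE (inj_eq perm_inj). Qed.

Lemma Dm_supp (s : {perm 'I_24}) F v : #|[set z | s z != z]| <= Dm s F v + 3.
Proof.
rewrite /Dm.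
have sub : [set z | s z != z] \subset
     [set z | (z != v) && (Tf s F v z != sw F v z)] :|: [set v; (s^-1)%g F; F].
  apply/subsetP => z; rewrite !inE => Hz.
  case: (z =P v) => [->|/eqP Hzv]; rewrite ?eqxx ?orbT //.
  case: (z =P (s^-1)%g F) => [->|/eqP Hzs]; rewrite ?eqxx ?orbT //.
  case: (z =P F) => [->|/eqP HzF]; rewrite ?eqxx ?orbT //.
  rewrite /Tf /sw (negbTE Hzv) (negbTE HzF) /=.
  have -> : (s z == F) = false.
    by apply/negbTE; apply: contra Hzs => /eqP <-; rewrite permK.
  by rewrite Hz.
apply: (leq_trans (subset_leq_card sub)); rewrite cardsU.
apply: (leq_trans (leq_subr _ _)); rewrite leq_add2l.
apply: (leq_trans _ (card_size [:: v; (s^-1)%g F; F])).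
apply: subset_leq_card; apply/subsetP => y; rewrite !inE -!orbA => /or3P [] /eqP ->.
all: by rewrite eqxx ?orbT.
Qed.


Lemma H_M24 k : k <= 7 -> H k \subset M24.
Proof.
elim: k => [|k IH] Hk; first by rewrite H0.
by apply: subset_trans (H_sub Hk) (IH (ltnW Hk)).
Qed.

Section Conj.
Local Open Scope group_scope.
Variable s : {perm 'I_24}.
Hypotheses (Hs : s \in M24) (Hfix : 5 <= #|[set z | s z == z]|).

Lemma conj_step k : k <= 5 -> exists2 h, h \in M24 & h^-1 * s * h \in H k.
Proof.
elim: k => [|k IH] Hk.
  by exists 1; rewrite ?group1 // invg1 mul1g mulg1 H0.
have Hk7 : k < 7 by apply: leq_trans Hk _.
have [h HhM Hc] := IH (ltnW Hk).
set c := h^-1 * s * h in Hc.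
have Hfc : 5 <= #|[set z | c z == z]| by rewrite fix_conj.
have [y /andP [Hy Hky]] : exists y : 'I_24, (c y == y) && (k <= y).
  case: (boolP [exists y, (c y == y) && (k <= y)]) => [/existsP //|/existsPn Hn]; exfalso.
  have sub : [set z | c z == z] \subset [set (inord (val i) : 'I_24) | i : 'I_k].
    apply/subsetP => z; rewrite inE => Hz.
    have Hzk : z < k by move: (Hn z); rewrite Hz /= -ltnNge.
    apply/imsetP; exists (Ordinal Hzk) => //=; by rewrite inord_val.
  have := leq_trans Hfc (leq_trans (subset_leq_card sub) (leq_imset_card _ _)).
  by rewrite card_ord; move: Hk; lia.
have HyO : y \in Oo k.
  rewrite mem_Oo //.
  have := chk_l Hk7 => /and5P [_ _ _ _ /and5P [_ _ _ _ /andP [C9 _]]].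
  by move: C9; rewrite Hk => /allP /(_ (nat_of_ord y)); rewrite mem_iota ltn_ord Hky; apply.
set u := ttn k y.
have Hu : u \in H k by apply: ttn_in => //; rewrite -mem_Oo.
have Hub : u (inord k) = y by exact: (LHtb Hk7 HyO).
exists (h * u^-1).
  by rewrite groupM ?groupV //; apply: (subsetP (H_M24 (ltnW Hk7))).
have -> : (h * u^-1)^-1 * s * (h * u^-1) = u * c * u^-1 by rewrite invMg invgK /c !mulgA.
apply: H_stab => //.
  by rewrite /H in Hu Hc *; apply: groupM; [apply: groupM | rewrite groupV].
move: (eqP Hy); rewrite /c !permM Hub => ->; by rewrite -Hub permK.
Qed.
End Conj.

Theorem P_M24 (s : {perm 'I_24}) F v : s \in M24 -> s != 1%g -> 14 <= Dm s F v.
Proof.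
move=> Hs Hs1; case: (leqP 5 #|[set z | s z == z]|) => Hfix.
  have [h HhM Hk] := conj_step Hs Hfix (leqnn 5).
  have [z Hz [y Hy Ek]] := H5_elem Hk.
  have Rk : Rel (scomp (trv evs 6 z) (trv evs 5 y)) (h^-1 * s * h)%g.
    by rewrite Ek; apply: Rel_comp; apply: Rel_trv.
  have := chk_K; rewrite /chkK => /allP /(_ (nat_of_ord z)); rewrite -mem_Oo // => /(_ Hz).
  move=> /allP /(_ (nat_of_ord y)); rewrite -mem_Oo // => /(_ Hy) /orP [/eqP E|].
    rewrite E in Rk; have E1 := Rel_inj Rk Rel_id.
    case/eqP: Hs1; apply: (mulgI (h^-1)%g); apply: (mulIg h).
    by rewrite E1 mulg1 mulVg.
  move=> /allP /(_ (nat_of_ord (h F))); rewrite mem_iota ltn_ord => /(_ isT).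
  move=> /allP /(_ (nat_of_ord (h v))); rewrite mem_iota ltn_ord => /(_ isT).
  by rewrite (Dm_seq _ _ Rk) Dm_conj.
have Hsupp : 20 <= #|[set z | s z != z]|.
  have := cardsC [set z | s z != z]; rewrite card_ord.
  have -> : ~: [set z | s z != z] = [set z | s z == z] by apply/setP => z; rewrite !inE negbK.
  by move=> E; move: Hfix; lia.
by have := Dm_supp s F v; lia.
Qed.


Definition code (T : finType) d (A : {set {perm T}}) :=
  forall p q, p \in A -> q \in A -> p != q -> d <= hd p q.

Lemma hd_refl (T : finType) (p : {perm T}) : hd p p = 0.
Proof. by apply: eq_card0 => x; rewrite inE eqxx. Qed.

Lemma hd_tri_minus (T : finType) (F : T) p q :
  hd (tri_minus F p) (tri_minus F q) = #|[set y | (y != F) && (tri F p y != tri F q y)]|.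
Proof.
rewrite /hd -(card_imset _ val_inj); apply: eq_card => y.
apply/imsetP/idP.
  case=> x; rewrite /tri_minus !inE /= !permE /= => Hx ->; rewrite (valP x) /=.
  by move: Hx; rewrite -val_eqE.
rewrite inE => /andP [Hy Hn]; exists (exist _ y Hy) => //.
by rewrite /tri_minus !inE /= !permE -val_eqE.
Qed.

Lemma hd_tri_Dm (F : 'I_24) p q :
  hd (tri_minus F p) (tri_minus F q) = Dm (q^-1 * p)%g F (q F).
Proof.
rewrite hd_tri_minus /Dm; symmetry; apply: (conj_card (h := q)) => y /=.
have Es z : (q^-1 * p)%g (q z) = p z by rewrite permM permK.
rewrite /Tf /sw /tri !Es (inj_eq perm_inj).
case: (y =P F) => [->|/eqP Hy] //=.
have Ep (s : {perm 'I_24}) : (y == (s^-1)%g F) = (s y == F).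
  by apply/eqP/eqP => [->|<-]; rewrite ?permKV ?permK.
by rewrite !Ep.
Qed.

Lemma tri_hd (F : 'I_24) p q : p \in M24 -> q \in M24 -> p != q ->
  14 <= hd (tri_minus F p) (tri_minus F q).
Proof.
move=> Hp Hq Hpq; rewrite hd_tri_Dm; apply: P_M24.
  by rewrite groupM ?groupV.
apply: contra Hpq => /eqP E; apply/eqP.
by apply: (mulgI (q^-1)%g); rewrite E mulVg.
Qed.

Lemma tri_code (F : 'I_24) : code 14 (tri_minus_set F M24).
Proof.
move=> p' q' /imsetP [p Hp ->] /imsetP [q Hq ->] Hne; apply: tri_hd => //.
by apply: contra Hne => /eqP ->.
Qed.

Lemma tri_card (F : 'I_24) : #|tri_minus_set F M24| = #|M24|.
Proof.
apply: card_in_imset => p q Hp Hq E; apply/eqP; apply: contraT => Hne.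
by have := tri_hd F Hp Hq Hne; rewrite E hd_refl.
Qed.

Lemma hdset_ge (T : finType) d (A : {set {perm T}}) : d <= #|T| -> code d A -> d <= hdset A.
Proof.
move=> HT HA; rewrite /hdset; elim/big_ind: _ => //.
  by move=> x y Hx Hy; rewrite leq_min Hx.
by case=> p q /andP [/setXP [Hp Hq] Hne]; apply: HA.
Qed.

Lemma Mnd_ge n d (A : {set {perm 'I_n}}) : code d A -> #|A| <= Mnd n d.
Proof.
move=> HA; rewrite /Mnd; apply: leq_bigmax_cond.
apply/forallP => p; apply/implyP => Hp; apply/forallP => q; apply/implyP => Hq.
by apply/implyP; apply: HA.
Qed.

Lemma bij_card (T U : finType) (f : T -> U) (g : U -> T) (P : pred T) :
  cancel f g -> cancel g f -> #|[pred u | P (g u)]| = #|[pred x | P x]|.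
Proof.
move=> fK gK; rewrite -(card_image (can_inj gK) [pred u | P (g u)]).
apply: eq_card => x; apply/imageP/idP.
  by case=> u; rewrite inE => Hu ->.
by move=> Hx; exists (f x); rewrite ?inE fK.
Qed.

Lemma transfer_code (T U : finType) d (A : {set {perm T}}) : #|T| = #|U| -> code d A ->
  exists2 B : {set {perm U}}, code d B & #|B| = #|A|.
Proof.
move=> E HA.
pose f (x : T) : U := enum_val (cast_ord E (enum_rank x)).
pose g (y : U) : T := enum_val (cast_ord (esym E) (enum_rank y)).
have fK : cancel f g by move=> x; rewrite /f /g enum_valK cast_ordK enum_rankK.
have gK : cancel g f by move=> y; rewrite /f /g enum_valK cast_ordKV enum_rankK.
have cinj (p : {perm T}) : injective (fun u => f (p (g u))).
  by move=> u v /(can_inj fK) /perm_inj /(can_inj gK).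
pose cp p := perm (cinj p).
have hdc p q : hd (cp p) (cp q) = hd p q.
  rewrite /hd -(bij_card (fun x => p x != q x) fK gK); apply: eq_card => u.
  by rewrite !inE !permE (inj_eq (can_inj fK)).
have cpinj : injective cp.
  move=> p q /permP Epq; apply/permP => x.
  by have := Epq (f x); rewrite !permE fK => /(can_inj fK).
exists (cp @: A); last by rewrite card_imset.
move=> p' q' /imsetP [p Hp ->] /imsetP [q Hq ->] Hne; rewrite hdc; apply: HA => //.
by apply: contra Hne => /eqP ->.
Qed.

Lemma short_code (T : finType) (a : T) d (A : {set {perm T}}) : 0 < d -> code d A ->
  exists2 B : {set {perm {x : T | x != a}}}, code d B & #|A| %/ #|T| <= #|B|.
Proof.
move=> Hd HA.
pose c b := #|[set p in A | p a == b]|.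
have Hsum : #|A| = \sum_b c b.
  rewrite -sum1_card (partition_big (fun p : {perm T} => p a) predT) //=.
  by apply: eq_bigr => b _; rewrite /c -sum1_card; apply: eq_bigl => p; rewrite inE.
have HT : 0 < #|T| by apply/card_gt0P; exists a.
have [b Hb] := eq_bigmax c HT.
have Hcb : #|A| %/ #|T| <= c b.
  have : #|A| <= #|T| * c b.
    rewrite Hsum -Hb -sum_nat_const; apply: leq_sum => i _; exact: leq_bigmax.
  by move/(leq_div2r #|T|); rewrite mulKn.
pose Ab := [set p in A | p a == b].
pose r (p : {perm T}) := tri_minus a (p * tperm a b)%g.
have hdr (p q : {perm T}) : p a = b -> q a = b -> hd (r p) (r q) = hd p q.
  move=> Hp Hq; rewrite /r hd_tri_minus /hd -cardsE; apply: eq_card => y; rewrite !inE.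
  have trE (s : {perm T}) z : s a = b -> z != a -> tri a (s * tperm a b)%g z = tperm a b (s z).
    move=> Hs Hz; rewrite /tri (negbTE Hz) permM.
    have -> : (z == ((s * tperm a b)^-1)%g a) = false.
      apply/negbTE; apply: contra Hz => /eqP ->.
      by rewrite -[in X in _ == X](permK (s * tperm a b)%g a) permM Hs tpermR.
    by rewrite permM.
  case: (y =P a) => [->|/eqP Hy] /=; first by rewrite Hp Hq eqxx.
  by rewrite !trE // (inj_eq perm_inj).
exists (r @: Ab); last first.
  rewrite card_in_imset //.
  move=> p q; rewrite !inE => /andP [Hp /eqP Hpa] /andP [Hq /eqP Hqa] E.
  apply/eqP; apply: contraT => Hne; have := HA p q Hp Hq Hne.
  by rewrite -hdr // E hd_refl leqNgt Hd.
move=> p' q' /imsetP [p + ->] /imsetP [q + ->]; rewrite !inE.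
move=> /andP [Hp /eqP Hpa] /andP [Hq /eqP Hqa] Hne; rewrite hdr //.
by apply: HA => //; apply: contra Hne => /eqP ->.
Qed.

Lemma card_short (T : finType) (a : T) : #|{: {x : T | x != a}}| = #|T|.-1.
Proof. by rewrite card_sig -(cardC1 a); apply: eq_card => x; rewrite !inE. Qed.


Theorem proposition18 (F : 'I_24) :
  [/\ 14 <= hdset (tri_minus_set F M24),
      #|M24| = 24 * 23 * 22 * 21 * 20 * 48 /\ #|M24| <= Mnd 23 14,
      #|M24| %/ 23 <= Mnd 22 14
    & #|M24| %/ (23 * 22) <= Mnd 21 14].
Proof.
have E23 : #|ThetaF F| = 23 by rewrite /ThetaF card_short card_ord.
have [a _] : exists a : ThetaF F, a \in ThetaF F by apply/card_gt0P; rewrite E23.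
have [B2 HB2 EB2] := @short_code _ a 14 _ isT (@tri_code F).
rewrite E23 (@tri_card F) in EB2.
have E22 : #|{: {x : ThetaF F | x != a}}| = 22 by rewrite card_short E23.
have [a' _] : exists a' : {x : ThetaF F | x != a}, a' \in {: {x : ThetaF F | x != a}}.
  by apply/card_gt0P; rewrite E22.
have [B3 HB3 EB3] := @short_code _ a' 14 _ isT HB2.
have E21 : #|{: {x : {x : ThetaF F | x != a} | x != a'}}| = 21 by rewrite card_short E22.
split.
- by apply: hdset_ge; [rewrite E23 | exact: (@tri_code F)].
- split; first exact: card_M24.
  have [B HB EB] := transfer_code (U := 'I_23) (etrans E23 (esym (card_ord 23))) (@tri_code F).
  by rewrite -(@tri_card F) -EB; apply: Mnd_ge.
- have [B HB EB] := transfer_code (U := 'I_22) (etrans E22 (esym (card_ord 22))) HB2.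
  by apply: (leq_trans EB2); rewrite -EB; apply: Mnd_ge.
- have [B HB EB] := transfer_code (U := 'I_21) (etrans E21 (esym (card_ord 21))) HB3.
  rewrite E22 in EB3.
  apply: (leq_trans _ (leq_trans EB3 _)); last by rewrite -EB; apply: Mnd_ge.
  by rewrite divnMA; apply: leq_div2r.
Qed.
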